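(* Let $A\in\mathbb{R}^{m\times n}$ have rank $r$. (1) Consider the linear program in the variables $H^+,H^-\in\mathbb{R}^{n\times m}$: minimize $\sum_{i,j}(H^+_{ij}+H^-_{ij})$ subject to $AHA=A$, $(AH)^\top=AH$, $H^+\ge 0$, $H^-\ge0$, where $H:=H^+-H^-$. For every extreme point $(H^+,H^-)$ of its feasible region, $H=H^+-H^-$ has at most $mr$ nonzero entries. Moreover this bound is sharp for all $m\ge n\ge r\ge 1$: for such $m,n,r$ there is an $m\times n$ matrix $A$ of rank $r$ for which some extreme solution $H$ has exactly $mr$ nonzero entries. (2) Consider the linear program in the variables $H^+,H^-\in\mathbb{R}^{n\times m}$: minimize $\sum_{i,j}(H^+_{ij}+H^-_{ij})$ subject to $AHA=A$, $(AH)^\top=AH$, $HAA^+=H$, $H^+\ge 0$, $H^-\ge0$, where $H:=H^+-H^-$ and $A^+$ is the Moore–Penrose pseudoinverse of $A$ (this is the linear program for minimizing $\|H\|_1$ subject to $AHA=A$, $HAH=H$, $(AH)^\top=AH$, since under the first and third conditions $HAH=H$ is equivalent to $HAA^+=H$). For every extreme point $(H^+,H^-)$ of its feasible region, $H=H^+-H^-$ has at most $mr+(m-r)(n-r)$ nonzero entries.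
   Context: $\|H\|_1=\sum_{i,j}|H_{ij}|$; inequalities $H^{\pm}\ge0$ are entrywise. $A^+$ denotes the Moore–Penrose pseudoinverse of $A$. *)

(* Defs.v *)
From HB Require Import structures.
From mathcomp Require Import all_boot all_order all_algebra.
From mathcomp Require Import reals.
Set Implicit Arguments. Unset Strict Implicit. Unset Printing Implicit Defensive.
Import Order.TTheory GRing.Theory Num.Theory.
Local Open Scope ring_scope.

Definition is_MP_pinv (R : realType) (m n : nat)
  (A : 'M[R]_(m, n)) (Ap : 'M[R]_(n, m)) : Prop :=
  [/\ A *m Ap *m A = A, Ap *m A *m Ap = Ap,
      (A *m Ap)^T = A *m Ap & (Ap *m A)^T = Ap *m A].

Definition mx_nonneg (R : realType) (p q : nat) (M : 'M[R]_(p, q)) : Prop :=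
  forall i j, 0 <= M i j.

Definition lp1_feasible (R : realType) (m n : nat) (A : 'M[R]_(m, n))
  (Hp Hm : 'M[R]_(n, m)) : Prop :=
  [/\ A *m (Hp - Hm) *m A = A,
      (A *m (Hp - Hm))^T = A *m (Hp - Hm),
      mx_nonneg Hp & mx_nonneg Hm].

(* Feasible region of LP (2); Ap plays the role of A^+. *)
Definition lp2_feasible (R : realType) (m n : nat) (A : 'M[R]_(m, n))
  (Ap : 'M[R]_(n, m)) (Hp Hm : 'M[R]_(n, m)) : Prop :=
  [/\ A *m (Hp - Hm) *m A = A,
      (A *m (Hp - Hm))^T = A *m (Hp - Hm),
      (Hp - Hm) *m A *m Ap = Hp - Hm,
      mx_nonneg Hp & mx_nonneg Hm].

Definition extreme_point (R : realType) (n m : nat)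
  (F : 'M[R]_(n, m) -> 'M[R]_(n, m) -> Prop) (Hp Hm : 'M[R]_(n, m)) : Prop :=
  F Hp Hm /\
  forall (P1 M1 P2 M2 : 'M[R]_(n, m)) (t : R),
    F P1 M1 -> F P2 M2 -> 0 < t < 1 ->
    Hp = t *: P1 + (1 - t) *: P2 -> Hm = t *: M1 + (1 - t) *: M2 ->
    P1 = Hp /\ M1 = Hm.

Definition nnz (R : realType) (p q : nat) (M : 'M[R]_(p, q)) : nat :=
  #|[set ij : 'I_p * 'I_q | M ij.1 ij.2 != 0]|.

(* Main.v *)
Require Import Defs.
From HB Require Import structures.
From mathcomp Require Import all_boot all_order all_algebra.
From mathcomp Require Import reals.
From mathcomp Require Import zify ring lra.
Import Order.TTheory GRing.Theory Num.Theory.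
Local Open Scope ring_scope.
Set Implicit Arguments. Unset Strict Implicit. Unset Printing Implicit Defensive.

Lemma GL (R : fieldType) p N (V : 'M[R]_(p,N)) (Sc : {set 'I_N}) :
  (#|Sc| < p)%N -> exists2 x : 'rV_p, x != 0 & forall l, l \in Sc -> (x *m V) 0 l = 0.
Proof.
move=> hlt.
set C := colsub (fun k : 'I_#|Sc| => enum_val k) V.
have : kermx C != 0.
  rewrite -mxrank_eq0 mxrank_ker subn_eq0 -ltnNge.
  exact: leq_ltn_trans (rank_leq_col C) hlt.
case/rowV0Pn => x /sub_kermxP xC x0; exists x => // l lS.
rewrite -(enum_rankK_in lS lS); move: (enum_rank_in lS l) => k.
transitivity ((x *m C) 0 k); last by rewrite xC mxE.
by rewrite !mxE; apply: eq_bigr => j _; rewrite mxE.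
Qed.
Lemma ML (R : fieldType) n m a b (U : 'M[R]_(n,a)) (W : 'M[R]_(b,m)) (S : {set 'I_n * 'I_m}) :
 (forall Y : 'M_(a,b), U *m Y *m W = 0 -> Y = 0) ->
 (forall Y : 'M_(a,b), (forall i j, (i,j) \notin S -> (U *m Y *m W) i j = 0) -> U *m Y *m W = 0) ->
 (a * b + #|S| <= n * m)%N.
Proof.
move=> hinj hsupp; rewrite leqNgt; apply/negP => hlt.
set Sc := [set mxvec_index ij.1 ij.2 | ij in ~: S].
have cSc : #|Sc| = (n * m - #|S|)%N.
  rewrite card_imset; last first.
    by move=> [i j] [i' j'] /= /cast_ord_inj/enum_rank_inj.
  by have := cardsC S; rewrite card_prod !card_ord => <-; rewrite addKn.
pose f := (@mxvec R n m \o mulmxr W \o mulmx U \o @vec_mx R a b).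
have hS : (#|S| <= n * m)%N by have := max_card S; rewrite card_prod !card_ord.
have hlt2 : (#|Sc| < a * b)%N by rewrite cSc; lia.
have [x x0 hx] := GL (lin1_mx f) hlt2.
have := mul_rV_lin1 f x.
move=> e; move: hx; rewrite e /f /= => hx.
have : U *m vec_mx x *m W = 0.
  apply: hsupp => i j hij; rewrite -mxvecE; apply: hx.
  by apply/imsetP; exists (i, j); rewrite ?inE.
move/hinj/(congr1 mxvec); rewrite vec_mxK linear0 => x0'.
by rewrite x0' eqxx in x0.
Qed.
Lemma EK (R : realType) n m (F : 'M[R]_(n,m) -> 'M_(n,m) -> Prop)
  (Qz : 'M[R]_(n,m) -> Prop) (Hp Hm : 'M[R]_(n,m)) :
  extreme_point F Hp Hm -> mx_nonneg Hp -> mx_nonneg Hm ->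
  (forall Z1 Z2, Qz (Z1 - Z2) -> mx_nonneg (Hp + Z1) -> mx_nonneg (Hm + Z2) ->
     F (Hp + Z1) (Hm + Z2)) ->
  (forall c Z, Qz Z -> Qz (c *: Z)) ->
  forall Z, Qz Z -> (forall i j, (Hp - Hm) i j = 0 -> Z i j = 0) -> Z = 0.
Proof.
move=> [hF hext] hp hm hcl hsc Z hZ hsupp.
pose w i j := if 0 < Hp i j then Hp i j else Hm i j.
pose Zp := \matrix_(i,j) if 0 < Hp i j then Z i j else 0.
pose Zm := \matrix_(i,j) if 0 < Hp i j then 0 else - Z i j.
have eZ : Zp - Zm = Z.
  by apply/matrixP => i j; rewrite !mxE; case: ifP => _; rewrite ?subr0 ?sub0r ?opprK.
have w0 : forall i j, 0 <= w i j by move=> i j; rewrite /w; case: ifP.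
pose T := \sum_(k : 'I_n * 'I_m) `|Z k.1 k.2| / w k.1 k.2.
have T0 : 0 <= T by apply: sumr_ge0 => k _; apply: divr_ge0.
pose e := (1 + T)^-1.
have T1 : 0 < 1 + T by lra.
have e0 : 0 < e by rewrite invr_gt0.
have eT : e * (1 + T) = 1 by rewrite mulVf // lt0r_neq0.
have key : forall i j, e * `|Z i j| <= w i j.
  move=> i j; have [wz|wnz] := eqVneq (w i j) 0.
    suff -> : Z i j = 0 by rewrite normr0 mulr0 wz.
    apply: hsupp; move: wz; rewrite /w !mxE; case: ifP => [h|h]; first by move=> e0'; rewrite e0' ltxx in h.
    have := hp i j; rewrite le_eqVlt h orbF => /eqP <- ->; rewrite subr0.
    done.
  have wp : 0 < w i j by rewrite lt_neqAle eq_sym wnz w0.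
  have hT : `|Z i j| / w i j <= T.
    rewrite /T (bigD1 (i, j)) //= lerDl; apply: sumr_ge0 => k _; apply: divr_ge0 => //.
  have hu : `|Z i j| = (`|Z i j| / w i j) * w i j by rewrite divfK.
  rewrite hu; move: hT; set u := `|Z i j| / w i j => hT.
  have ew : 0 < e * w i j by rewrite mulr_gt0.
  have h1 : 0 <= (T - u) * (e * w i j) by rewrite mulr_ge0 // ?subr_ge0 // ltW.
  have h2 : e * (1 + T) * w i j = w i j by rewrite eT mul1r.
  nra.
have nnP : forall s : R, `|s| <= 1 -> mx_nonneg (Hp + (s * e) *: Zp).
  move=> s hs i j; rewrite !mxE; have := key i j; rewrite /w; case: ifP => h; last by rewrite mulr0 addr0.
  move=> k; have h1 : `|s * e * Z i j| <= e * `|Z i j|.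
    by rewrite !normrM (gtr0_norm e0) -mulrA ler_piMl // mulr_ge0 // ltW.
  have := ler_norm (- (s * e * Z i j)); rewrite normrN. lra.
have nnM : forall s : R, `|s| <= 1 -> mx_nonneg (Hm + (s * e) *: Zm).
  move=> s hs i j; rewrite !mxE; have := key i j; rewrite /w; case: ifP => h; first by rewrite mulr0 addr0.
  move=> k; have h1 : `|s * e * - Z i j| <= e * `|Z i j|.
    by rewrite !normrM normrN (gtr0_norm e0) -mulrA ler_piMl // mulr_ge0 // ltW.
  have := ler_norm (- (s * e * - Z i j)); rewrite normrN. lra.
have Qs : forall s, Qz ((s * e) *: Zp - (s * e) *: Zm) by move=> s; rewrite -scalerBr eZ; apply: hsc.
have n1 : `|1 : R| <= 1 by rewrite normr1.
have n2 : `|-1 : R| <= 1 by rewrite normrN normr1.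
have F1 := hcl _ _ (Qs 1) (nnP 1 n1) (nnM 1 n1).
have F2 := hcl _ _ (Qs (-1)) (nnP (-1) n2) (nnM (-1) n2).
have [] := hext _ _ _ _ (2^-1) F1 F2 _ _ _.
- apply/andP; split; lra.
- by apply/matrixP => i j; rewrite !mxE; field.
- by apply/matrixP => i j; rewrite !mxE; field.
move=> /(congr1 (fun M => - Hp + M)) /=; rewrite addKr addNr ?mul1r => /eqP.
rewrite scaler_eq0 (negbTE (lt0r_neq0 e0)) /= => /eqP Zp0.
move=> /(congr1 (fun M => - Hm + M)) /=; rewrite addKr addNr ?mul1r => /eqP.
rewrite scaler_eq0 (negbTE (lt0r_neq0 e0)) /= => /eqP Zm0.
by rewrite -eZ Zp0 Zm0 subrr.
Qed.
Lemma kerU_AU (R : fieldType) m n (A : 'M[R]_(m,n)) :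
  A *m (row_base (kermx A^T))^T = 0.
Proof.
apply: trmx_inj; rewrite trmx_mul trmxK trmx0; apply/sub_kermxP.
by rewrite eq_row_base.
Qed.

Lemma kerU_inj (R : fieldType) m n p (A : 'M[R]_(m,n)) (Y : 'M_(_, p)) :
  (row_base (kermx A^T))^T *m Y = 0 -> Y = 0.
Proof.
move=> /(congr1 trmx); rewrite trmx_mul trmxK trmx0 => /eqP.
rewrite mulmx_free_eq0 ?row_base_free // => /eqP /(congr1 trmx).
by rewrite trmxK trmx0.
Qed.

Lemma kerU_rank (R : fieldType) m n (A : 'M[R]_(m,n)) :
  \rank (kermx A^T) = (n - \rank A)%N.
Proof. by rewrite mxrank_ker mxrank_tr. Qed.

Lemma part1 (R : realType) (m n : nat) (A : 'M[R]_(m, n)) (Hp Hm : 'M[R]_(n, m)) :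
     extreme_point (lp1_feasible A) Hp Hm ->
     (nnz (Hp - Hm) <= m * \rank A)%N.
Proof.
move=> hext; have [[e1 e2 hp hm] _] := hext.
set S := [set ij : 'I_n * 'I_m | (Hp - Hm) ij.1 ij.2 != 0].
have hEK := EK (Qz := fun Z => A *m Z = 0) hext hp hm.
have hcl : forall Z1 Z2 : 'M_(n, m), A *m (Z1 - Z2) = 0 ->
     mx_nonneg (Hp + Z1) -> mx_nonneg (Hm + Z2) -> lp1_feasible A (Hp + Z1) (Hm + Z2).
  move=> Z1 Z2 hZ h1 h2; rewrite /lp1_feasible.
  have -> : Hp + Z1 - (Hm + Z2) = (Hp - Hm) + (Z1 - Z2) by rewrite addrACA opprD.
  by split => //; rewrite mulmxDr hZ addr0 // mul0mx addr0.
have hsc : forall (c : R) (Z : 'M_(n, m)), A *m Z = 0 -> A *m (c *: Z) = 0.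
  by move=> c Z hZ; rewrite -scalemxAr hZ scaler0.
have hML := @ML R n m _ m (row_base (kermx A^T))^T 1%:M S.
have hle : (\rank (kermx A^T) * m + #|S| <= n * m)%N.
  apply: hML.
  - by move=> Y; rewrite mulmx1; apply: kerU_inj.
  - move=> Y hY; apply: (hEK hcl hsc).
    + by rewrite mulmx1 mulmxA kerU_AU mul0mx.
    + by move=> i j hij; apply: hY; rewrite inE /= hij eqxx.
rewrite kerU_rank in hle.
have hr := rank_leq_col A.
rewrite /nnz -/S; nia.
Qed.
Lemma part2 (R : realType) (m n : nat) (A : 'M[R]_(m, n)) (Ap : 'M[R]_(n, m)) :
     is_MP_pinv A Ap ->
     forall Hp Hm : 'M[R]_(n, m),
       extreme_point (lp2_feasible A Ap) Hp Hm ->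
       (nnz (Hp - Hm) <= m * \rank A + (m - \rank A) * (n - \rank A))%N.
Proof.
move=> [p1 p2 p3 p4] Hp Hm hext; have [[e1 e2 e3 hp hm] _] := hext.
set S := [set ij : 'I_n * 'I_m | (Hp - Hm) ij.1 ij.2 != 0].
have hEK := EK (Qz := fun Z => A *m Z = 0 /\ Z *m A *m Ap = Z) hext hp hm.
have hcl : forall Z1 Z2 : 'M_(n, m), A *m (Z1 - Z2) = 0 /\ (Z1 - Z2) *m A *m Ap = Z1 - Z2 ->
     mx_nonneg (Hp + Z1) -> mx_nonneg (Hm + Z2) -> lp2_feasible A Ap (Hp + Z1) (Hm + Z2).
  move=> Z1 Z2 [hZ hZ'] h1 h2; rewrite /lp2_feasible.
  have -> : Hp + Z1 - (Hm + Z2) = (Hp - Hm) + (Z1 - Z2) by rewrite addrACA opprD.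
  split => //.
  - by rewrite mulmxDr hZ addr0.
  - by rewrite mulmxDr hZ addr0.
  - by rewrite mulmxDl mulmxDl e3 hZ'.
have hsc : forall (c : R) (Z : 'M_(n, m)), A *m Z = 0 /\ Z *m A *m Ap = Z ->
    A *m (c *: Z) = 0 /\ (c *: Z) *m A *m Ap = c *: Z.
  by move=> c Z [hZ hZ']; rewrite -scalemxAr hZ scaler0 -!scalemxAl hZ'.
set P := A *m Ap.
have PP : P *m P = P by rewrite /P mulmxA p1.
have WP : row_base P *m P = row_base P.
  have /submxP [X ->] : (row_base P <= P)%MS by rewrite eq_row_base.
  by rewrite -mulmxA PP.
have rP : \rank P = \rank A.
  apply/eqP; rewrite eqn_leq mxrankM_maxl /=.
  by rewrite -{1}p1 -/P mxrankM_maxl.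
have hML := @ML R n m _ _ (row_base (kermx A^T))^T (row_base P) S.
have hle : (\rank (kermx A^T) * \rank P + #|S| <= n * m)%N.
  apply: hML.
  - move=> Y /eqP; rewrite mulmx_free_eq0 ?row_base_free // => /eqP.
    exact: kerU_inj.
  - move=> Y hY; apply: (hEK hcl hsc).
    + split; first by rewrite !mulmxA kerU_AU !mul0mx.
      by rewrite -[_ *m A *m Ap]mulmxA -/P -[_ *m row_base P *m P]mulmxA WP.
    + by move=> i j hij; apply: hY; rewrite inE /= hij eqxx.
rewrite kerU_rank rP in hle.
have hr := rank_leq_col A.
have hr' := rank_leq_row A.
rewrite /nnz -/S; nia.
Qed.

Definition Em (R : realType) p q : 'M[R]_(p,q) := \matrix_(i,j) ((i : nat) == j)%:R.
Definition Jm (R : realType) p q : 'M[R]_(p,q) := const_mx 1.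
Arguments Em {R} p q.
Arguments Jm {R} p q.

Lemma sum_delta1 (R : realType) p (a : nat) (l0 : 'I_p) (F : 'I_p -> R) : (l0 : nat) = a ->
  \sum_(l < p) (((l : nat) == a)%:R * F l) = F l0.
Proof.
move=> <-; rewrite (bigD1 l0) //= eqxx mul1r big1 ?addr0 // => l hl.
by case: eqP => [/val_inj e|]; [rewrite e eqxx in hl | rewrite mul0r].
Qed.

Lemma sum_delta0 (R : realType) p (a : nat) (F : 'I_p -> R) : (p <= a)%N ->
  \sum_(l < p) (((l : nat) == a)%:R * F l) = 0.
Proof.
move=> h; apply: big1 => l _; case: eqP => [e|]; last by rewrite mul0r.
by move: (ltn_ord l); rewrite e ltnNge h.
Qed.



Lemma sum_one (R : realType) p : \sum_(l < p) (1 : R) = p%:R.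
Proof. by rewrite sumr_const card_ord. Qed.

Lemma EE_E (R : realType) p s q i j : (Em p s *m Em s q : 'M[R]_(p,q)) i j = (((i : nat) == j) && (i < s)%N)%:R.
Proof.
rewrite mxE; under eq_bigr => l _ do rewrite !mxE eq_sym.
case: (ltnP i s) => h; last by rewrite sum_delta0 // andbF.
by rewrite (sum_delta1 (l0 := Ordinal h)) // andbT.
Qed.

Lemma EJ_E (R : realType) p s q i j : (Em p s *m Jm s q : 'M[R]_(p,q)) i j = ((i < s)%N)%:R.
Proof.
rewrite mxE; under eq_bigr => l _ do rewrite !mxE eq_sym.
case: (ltnP i s) => h; last by rewrite sum_delta0.
by rewrite (sum_delta1 (l0 := Ordinal h)) // mxE.
Qed.

Lemma JE_E (R : realType) p s q i j : (Jm p s *m Em s q : 'M[R]_(p,q)) i j = ((j < s)%N)%:R.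
Proof.
rewrite mxE; under eq_bigr => l _ do rewrite !mxE mul1r -[_%:R]mulr1.
case: (ltnP j s) => h; last by rewrite sum_delta0.
by rewrite (sum_delta1 (l0 := Ordinal h)).
Qed.

Lemma JJ_E (R : realType) p s q i j : (Jm p s *m Jm s q : 'M[R]_(p,q)) i j = s%:R.
Proof.
rewrite mxE; under eq_bigr => l _ do rewrite !mxE mul1r.
by rewrite sum_one.
Qed.

Lemma EE (R : realType) p s q : (p <= s)%N -> Em p s *m Em s q = Em p q :> 'M[R]_(p,q).
Proof.
move=> h; apply/matrixP => i j; rewrite EE_E mxE.
by rewrite (leq_trans (ltn_ord i) h) andbT.
Qed.

Lemma EJ (R : realType) p s q : (p <= s)%N -> Em p s *m Jm s q = Jm p q :> 'M[R]_(p,q).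
Proof. by move=> h; apply/matrixP => i j; rewrite EJ_E mxE (leq_trans (ltn_ord i) h). Qed.

Lemma JE (R : realType) p s q : (q <= s)%N -> Jm p s *m Em s q = Jm p q :> 'M[R]_(p,q).
Proof. by move=> h; apply/matrixP => i j; rewrite JE_E mxE (leq_trans (ltn_ord j) h). Qed.

Lemma JJ (R : realType) p s q : Jm p s *m Jm s q = s%:R *: Jm p q :> 'M[R]_(p,q).
Proof. by apply/matrixP => i j; rewrite JJ_E !mxE mulr1. Qed.

Lemma trE (R : realType) p q : (Em p q)^T = Em q p :> 'M[R]_(q,p).
Proof. by apply/matrixP => i j; rewrite !mxE eq_sym. Qed.

Lemma trJ (R : realType) p q : (Jm p q)^T = Jm q p :> 'M[R]_(q,p).
Proof. by apply/matrixP => i j; rewrite !mxE. Qed.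

Lemma Em1 (R : realType) p : Em p p = 1%:M :> 'M[R]_p.
Proof. by apply/matrixP => i j; rewrite !mxE. Qed.

Lemma trD (R : realType) p q (A B : 'M[R]_(p,q)) : (A + B)^T = A^T + B^T.
Proof. by apply/matrixP => i j; rewrite !mxE. Qed.
Lemma trB (R : realType) p q (A B : 'M[R]_(p,q)) : (A - B)^T = A^T - B^T.
Proof. by apply/matrixP => i j; rewrite !mxE. Qed.
Lemma trZ (R : realType) p q (c : R) (A : 'M[R]_(p,q)) : (c *: A)^T = c *: A^T.
Proof. by apply/matrixP => i j; rewrite !mxE. Qed.

Definition Bm (R : realType) m r : 'M[R]_(m,r) := Em m r + Jm m r.
Definition cc (R : realType) m : R := (m + 2)%:R.
Definition dd (R : realType) m r : R := 1 + cc R m * r%:R.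
Definition gg (R : realType) m r : R := cc R m / dd R m r.
Definition Km (R : realType) m r : 'M[R]_r := Em r r - gg R m r *: Jm r r.
Definition Xm (R : realType) m r : 'M[R]_(r, m) := Km R m r *m (Bm R m r)^T.

Lemma dd_gt0 (R : realType) m r : 0 < dd R m r.
Proof.
rewrite /dd /cc; have h1 : (0 : R) <= (m + 2)%:R by rewrite ler0n.
have h2 : (0 : R) <= r%:R by rewrite ler0n.
have := mulr_ge0 h1 h2; lra.
Qed.

Lemma BtB (R : realType) m r : (r <= m)%N ->
  (Bm R m r)^T *m Bm R m r = Em r r + cc R m *: Jm r r.
Proof.
move=> h; rewrite /Bm trD !trE !trJ mulmxDl !mulmxDr EE // EJ // JE // JJ.
apply/matrixP => i j; rewrite !mxE /cc natrD; ring.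
Qed.

Lemma XB (R : realType) m r : (r <= m)%N -> Xm R m r *m Bm R m r = 1%:M.
Proof.
move=> h; rewrite /Xm -mulmxA BtB // /Km mulmxBl !mulmxDr -!scalemxAl -!scalemxAr.
rewrite EE // EJ // JE // JJ -Em1.
have d0 := dd_gt0 R m r.
apply/matrixP => i j; rewrite !mxE /gg /dd.
rewrite /dd in d0; field; lra.
Qed.

Lemma Ksym (R : realType) m r : (Km R m r)^T = Km R m r.
Proof. by rewrite /Km trB trZ trE trJ. Qed.

Lemma XE (R : realType) m r (i : 'I_r) (j : 'I_m) :
  Xm R m r i j = ((i : nat) == j)%:R + 1 - gg R m r * (j < r)%N%:R - gg R m r * r%:R.
Proof.
rewrite /Xm /Km /Bm trD !trE !trJ mulmxBl !mulmxDr -!scalemxAl EE // EJ //.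
have -> : Jm r r *m Em r m = \matrix_(i, j) ((j < r)%N)%:R :> 'M[R]_(r, m).
  by apply/matrixP => i' j'; rewrite JE_E mxE.
rewrite JJ !mxE; ring.
Qed.
Lemma num_neq0 (R : realType) (c rr a b : R) : 3 <= c -> 1 <= rr ->
  (a = 0 \/ a = 1) -> (b = 0 \/ b = 1) -> (b = 0 -> a = 0) ->
  (a + 1) * (1 + c * rr) - c * b - c * rr != 0.
Proof.
move=> hc hr ha hb hab; apply/eqP.
case: hb => hb; first by rewrite (hab hb) hb; lra.
case: ha => -> ; rewrite hb; nra.
Qed.

Lemma X_neq0 (R : realType) m r i j : (1 <= r)%N -> (r <= m)%N -> Xm R m r i j != 0.
Proof.
move=> h1 h2; rewrite XE.
have d0 := dd_gt0 R m r.
have -> : ((i : nat) == j)%:R + 1 - gg R m r * (j < r)%N%:R - gg R m r * r%:R =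
  ((((i : nat) == j)%:R + 1) * (1 + cc R m * r%:R) - cc R m * (j < r)%N%:R - cc R m * r%:R) / dd R m r.
  rewrite /gg /dd in d0 *; move: d0.
  move: (((i : nat) == j)%:R : R) ((j < r)%N%:R : R) (cc R m) (r%:R : R) => a b c rr d0.
  by field; rewrite lt0r_neq0.
apply: mulf_neq0; last by rewrite invr_neq0 // lt0r_neq0.
apply: num_neq0.
- rewrite /cc ler_nat; lia.
- by rewrite ler1n.
- by case: eqP; [right | left].
- by case: ltnP; [right | left].
- move=> hb; case: eqP => // e; move: hb; rewrite -e ltn_ord; move/eqP; rewrite oner_eq0.
  done.
Qed.
Lemma card_lt (r n : nat) : (r <= n)%N -> #|[set i : 'I_n | (i < r)%N]| = r.
Proof.
move=> h.
have -> : [set i : 'I_n | (i < r)%N] = widen_ord h @: [set: 'I_r].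
  apply/setP => i; rewrite inE; apply/idP/imsetP => [hi|[k _ ->]]; last by rewrite /= ltn_ord.
  by exists (Ordinal hi); rewrite ?inE //; apply: val_inj.
rewrite card_imset ?cardsT ?card_ord // => a b /(congr1 val) /= e; exact: val_inj.
Qed.

Definition Hmat (R : realType) m n r : 'M[R]_(n, m) := Em n r *m Xm R m r.

Lemma HmatE0 (R : realType) m n r (i : 'I_n) j : (r <= i)%N -> Hmat R m n r i j = 0.
Proof.
move=> h; rewrite /Hmat mxE; under eq_bigr => l _ do rewrite mxE eq_sym.
exact: sum_delta0.
Qed.

Lemma HmatE1 (R : realType) m n r (i : 'I_n) j (hi : (i < r)%N) :
  Hmat R m n r i j = Xm R m r (Ordinal hi) j.
Proof.
rewrite /Hmat mxE; under eq_bigr => l _ do rewrite mxE eq_sym.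
exact: sum_delta1.
Qed.

Lemma uniqH (R : realType) m n r : (r <= n)%N -> (n <= m)%N ->
  forall H' : 'M[R]_(n, m), (forall (i : 'I_n) (j : 'I_m), (r <= i)%N -> H' i j = 0) ->
  let A := Bm R m r *m Em r n in
  A *m H' *m A = A -> (A *m H')^T = A *m H' -> H' = Hmat R m n r.
Proof.
move=> hrn hnm H' hsupp A e1 e2.
have hrm : (r <= m)%N := leq_trans hrn hnm.
have PPt : Em r n *m Em n r = 1%:M :> 'M[R]_r by rewrite EE // Em1.
set B := Bm R m r; set X := Xm R m r; set Y := Em r n *m H'.
have XB1 : X *m B = 1%:M by apply: XB.
have BYB : B *m Y *m B = B.
  have := congr1 (fun M => M *m (Em n r)) e1.
  by rewrite /A -!mulmxA PPt mulmx1 !mulmxA.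
have YB : Y *m B = 1%:M.
  have := congr1 (fun M => X *m M) BYB.
  by rewrite !mulmxA XB1 mul1mx.
have AH : A *m H' = B *m Y by rewrite /A -mulmxA.
rewrite AH in e2.
have BXs : (B *m X)^T = B *m X.
  by rewrite /X /Xm trmx_mul trmx_mul trmxK Ksym mulmxA.
have DB : (Y - X) *m B = 0 by rewrite mulmxBl YB XB1 subrr.
have BDs : (B *m (Y - X))^T = B *m (Y - X) by rewrite mulmxBr trB e2 BXs.
have D0 : Y - X = 0.
  move: (Y - X) DB BDs => D DB BDs.
  have -> : D = X *m B *m D by rewrite XB1 mul1mx.
  rewrite -mulmxA -BDs trmx_mul /X /Xm -mulmxA [(Bm R m r)^T *m _]mulmxA -trmx_mul DB trmx0.
  by rewrite mul0mx mulmx0.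
have YX : Y = X by apply/eqP; rewrite -subr_eq0 D0.
have -> : H' = Em n r *m Y.
  apply/matrixP => i j; rewrite /Y mulmxA.
  case: (ltnP i r) => hi.
    rewrite mxE; under eq_bigr => l _ do rewrite EE_E.
    rewrite hi; under eq_bigr => l _ do rewrite andbT eq_sym.
    by rewrite (sum_delta1 (l0 := i)).
  rewrite hsupp // mxE big1 // => l _; rewrite EE_E.
  by rewrite (leq_gtF hi) andbF mul0r.
by rewrite YX.
Qed.
Lemma comb0 (R : realType) (t a b : R) : 0 < t < 1 -> 0 <= a -> 0 <= b ->
  t * a + (1 - t) * b = 0 -> a = 0.
Proof.
move=> /andP [t0 t1] ha hb e.
have h1 : 0 <= t * a by rewrite mulr_ge0 // ltW.
have h2 : 0 <= (1 - t) * b by rewrite mulr_ge0 // subr_ge0 ltW.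
have : t * a = 0 by lra.
by move/eqP; rewrite mulf_eq0 (negbTE (lt0r_neq0 t0)) /= => /eqP.
Qed.

Lemma alg1 (R : realType) m n r (B : 'M[R]_(m,r)) (P : 'M[R]_(r,n)) (X : 'M[R]_(r,m)) :
  P *m P^T = 1%:M -> X *m B = 1%:M -> B *m P *m (P^T *m X) *m (B *m P) = B *m P.
Proof.
move=> h1 h2.
by rewrite !mulmxA -(mulmxA B P) h1 mulmx1 -(mulmxA B X) h2 mulmx1.
Qed.

Lemma alg2 (R : realType) m n r (B : 'M[R]_(m,r)) (P : 'M[R]_(r,n)) (K : 'M[R]_r) :
  P *m P^T = 1%:M -> K^T = K -> (B *m P *m (P^T *m (K *m B^T)))^T = B *m P *m (P^T *m (K *m B^T)).
Proof.
move=> h1 h2.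
rewrite mulmxA -(mulmxA B P) h1 mulmx1.
by rewrite !trmx_mul trmxK h2 mulmxA.
Qed.

Lemma sharp (R : realType) (m n r : nat) : (1 <= r)%N -> (r <= n)%N -> (n <= m)%N ->
     exists A : 'M[R]_(m, n), \rank A = r /\
       exists Hp Hm : 'M[R]_(n, m),
         extreme_point (lp1_feasible A) Hp Hm /\ nnz (Hp - Hm) = (m * r)%N.
Proof.
move=> h1 hrn hnm; have hrm : (r <= m)%N := leq_trans hrn hnm.
set B := Bm R m r; set X := Xm R m r; set P := Em r n : 'M[R]_(r, n).
set H := Hmat R m n r.
have PPt : P *m P^T = 1%:M by rewrite trE EE // Em1.
have XB1 : X *m B = 1%:M by apply: XB.
exists (B *m P); split.
  apply/eqP; rewrite eqn_leq; apply/andP; split.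
    exact: leq_trans (mxrankM_maxr _ _) (rank_leq_row _).
  apply: (@leq_trans (\rank (1%:M : 'M[R]_r))); first by rewrite mxrank1.
  have -> : (1%:M : 'M[R]_r) = X *m (B *m P) *m P^T by rewrite mulmxA XB1 mul1mx PPt.
  exact: leq_trans (mxrankM_maxl _ _) (mxrankM_maxr _ _).
pose Hp := \matrix_(i, j) (if 0 <= H i j then H i j else 0) : 'M[R]_(n, m).
pose Hm := \matrix_(i, j) (if 0 <= H i j then 0 else - H i j) : 'M[R]_(n, m).
have HpHm : Hp - Hm = H.
  by apply/matrixP => i j; rewrite !mxE; case: ifP => _; rewrite ?subr0 ?sub0r ?opprK.
have hH : H = P^T *m X by rewrite /H /Hmat trE.
have feasH1 : B *m P *m H *m (B *m P) = B *m P.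
  by rewrite hH alg1.
have feasH2 : (B *m P *m H)^T = B *m P *m H.
  by rewrite hH /X /Xm alg2 // Ksym.
have Hpnn : mx_nonneg Hp by move=> i j; rewrite mxE; case: ifP.
have Hmnn : mx_nonneg Hm.
  by move=> i j; rewrite mxE; case: ifP => // /negbT; rewrite -ltNge oppr_ge0 => /ltW.
exists Hp, Hm; split; last first.
  rewrite /nnz HpHm.
  have -> : [set ij : 'I_n * 'I_m | H ij.1 ij.2 != 0] =
            setX [set i : 'I_n | (i < r)%N] [set: 'I_m].
    apply/setP => [[i j]]; rewrite !inE /= andbT.
    case: (ltnP i r) => hi; first by rewrite /H (HmatE1 _ _ hi) X_neq0.
    by rewrite /H HmatE0 // eqxx.
  by rewrite cardsX card_lt // cardsT card_ord mulnC.
split; first by split => //; rewrite HpHm.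
move=> P1 M1 P2 M2 t [f1 f2 p1 m1] [g1 g2 p2 m2] ht eP eM.
have zP : forall i j, Hp i j = 0 -> P1 i j = 0.
  move=> i j h; move/matrixP: eP => /(_ i j); rewrite h !mxE => e.
  exact: comb0 ht (p1 i j) (p2 i j) (esym e).
have zM : forall i j, Hm i j = 0 -> M1 i j = 0.
  move=> i j h; move/matrixP: eM => /(_ i j); rewrite h !mxE => e.
  exact: comb0 ht (m1 i j) (m2 i j) (esym e).
have HpE : forall (i : 'I_n) j, (r <= i)%N -> Hp i j = 0 /\ Hm i j = 0.
  move=> i j hi; have h0 : H i j = 0 by apply: HmatE0.
  by rewrite [Hp i j]mxE [Hm i j]mxE h0 lexx.
have H1 : P1 - M1 = H.
  apply: (uniqH hrn hnm) => //.
  by move=> i j hi; have [a b] := HpE i j hi; rewrite !mxE (zP _ _ a) (zM _ _ b) subr0.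
have eH : forall i j, P1 i j - M1 i j = H i j.
  by move=> i j; move: (H1); move/matrixP => /(_ i j) <-; rewrite !mxE.
split.
  apply/matrixP => i j; have e := eH i j; rewrite [Hp i j]mxE.
  case: ifP => h.
    have hm0 : M1 i j = 0 by apply: zM; rewrite [Hm i j]mxE h.
    by rewrite -e hm0 subr0.
  by apply: zP; rewrite [Hp i j]mxE h.
apply/matrixP => i j; have e := eH i j; rewrite [Hm i j]mxE.
case: ifP => h.
  by apply: zM; rewrite [Hm i j]mxE h.
have hp0 : P1 i j = 0 by apply: zP; rewrite [Hp i j]mxE h.
by rewrite -e hp0 sub0r opprK.
Qed.

Theorem proposition3p1 (R : realType) :
  (* (1) bound *)
  (forall (m n : nat) (A : 'M[R]_(m, n)) (Hp Hm : 'M[R]_(n, m)),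
     extreme_point (lp1_feasible A) Hp Hm ->
     (nnz (Hp - Hm) <= m * \rank A)%N) /\
  (* (1) sharpness *)
  (forall (m n r : nat), (1 <= r)%N -> (r <= n)%N -> (n <= m)%N ->
     exists A : 'M[R]_(m, n), \rank A = r /\
       exists Hp Hm : 'M[R]_(n, m),
         extreme_point (lp1_feasible A) Hp Hm /\ nnz (Hp - Hm) = (m * r)%N) /\
  (* (2) bound *)
  (forall (m n : nat) (A : 'M[R]_(m, n)) (Ap : 'M[R]_(n, m)),
     is_MP_pinv A Ap ->
     forall Hp Hm : 'M[R]_(n, m),
       extreme_point (lp2_feasible A Ap) Hp Hm ->
       (nnz (Hp - Hm) <= m * \rank A + (m - \rank A) * (n - \rank A))%N).
Proof.
split; first exact: part1.
split; first exact: sharp.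
exact: part2.
Qed.
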